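(* Let $C$ be a finite non-degenerate projective configuration with lines $l_0,l_1,\dots,l_n$, let $\mathcal{P}_0$ be the set of its points not incident to $l_0$, and let $\mathcal{A}=\{(i,p)\in\{1,\dots,n\}\times\mathcal{P}_0 : p \text{ is incident to } l_i\}$. Let $L=\bigoplus_{k\ge1}L_k$ be the free Lie algebra over $\mathbb{Z}$ on $x_1,\dots,x_n$, graded by degree, $H=L_1$, $S_p=\sum_{j:\,p\prec l_j}x_j$ for $p\in\mathcal{P}_0$ (sum over $j\in\{1,\dots,n\}$), $R_2\subset L_2$ the subgroup spanned by the elements $\bar r(i,p)=[x_i,S_p]$ for $(i,p)\in\mathcal{A}$ with $i\neq\min\{j: l_j\succ p\}$ (these elements form a $\mathbb{Z}$-basis of $R_2$), $R_3=[H,R_2]\subset L_3$ and $P_3=L_3/R_3$. Let $A=H^{\mathcal{A}}$ (all maps $\mathcal{A}\to H$) and define $\tilde\tau:A\to\mathrm{Hom}(R_2,P_3)$ on the basis of $R_2$ by $$\tilde\tau a(\bar r(i,p))=[[x_i,a(i,p)],S_p]+\Big[x_i,\sum_{j:\,p\prec l_j}[x_j,a(j,p)]\Big]+R_3 .$$ Let $U\subseteq A$ be the subgroup generated by the following elements: $a^{(0)}_{i,p}$ for $(i,p)\in\mathcal{A}$, given by $a^{(0)}_{i,p}(j,q)=\delta_{i,j}\delta_{p,q}x_i$; $a^{(1)}_{i,p}$ for $i\in\{1,\dots,n\}$, $p\in\mathcal{P}_0$, given by $a^{(1)}_{i,p}(j,q)=\delta_{p,q}x_i$; and $a^{(2)}_{i,p_1,p_2}$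 for $i\in\{1,\dots,n\}$ and $p_1,p_2\in\mathcal{P}_0$ both incident to $l_i$ (not necessarily distinct), given by $a^{(2)}_{i,p_1,p_2}(j,q)=\delta_{i,j}\delta_{p_1,q}S_{p_2}$. Then $U\subseteq\ker\tilde\tau$.
   Context: A projective configuration is a triple $(\mathcal{L},\mathcal{P},\succ)$ of a set of lines $\mathcal{L}$, a set of points $\mathcal{P}$ and an incidence relation $\succ$ between lines and points (written $l\succ p$ or $p\prec l$) such that any two distinct lines are incident to a unique common point, and every point is incident to at least two lines. It is non-degenerate if it has more than one point. $[\cdot,\cdot]$ denotes the Lie bracket in $L$. *)

(* Defs.v *)
From HB Require Import structures.
From mathcomp Require Import all_boot all_order all_algebra.
Set Implicit Arguments. Unset Strict Implicit. Unset Printing Implicit Defensive.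
Import Order.TTheory GRing.Theory Num.Theory.
Local Open Scope ring_scope.

(* Noncommutative formal power series over Z in variables x_0..x_{n-1}
   (indices shifted by one w.r.t. the paper: ordinal i : 'I_n stands for
   x_{i+1}).  The free Lie ring
   over Z on the x_i is realised (Magnus/Witt embedding) as the Lie
   subring generated by the x_i for the commutator bracket.            *)
Definition ser (n : nat) := seq 'I_n -> int.

Definition szero (n : nat) : ser n := fun _ => 0.
Definition sadd n (f g : ser n) : ser n := fun w => f w + g w.
Definition sopp n (f : ser n) : ser n := fun w => - f w.
Definition smul n (f g : ser n) : ser n :=
  fun w => \sum_(k < (size w).+1) f (take k w) * g (drop k w).
Definition sbr n (f g : ser n) : ser n := sadd (smul f g) (sopp (smul g f)).
Definition sx n (i : 'I_n) : ser n := fun w => if w == [:: i] then 1 else 0.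
Definition ssum n (I : finType) (P : pred I) (F : I -> ser n) : ser n :=
  fun w => \sum_(j | P j) F j w.

Inductive zspan (T : Type) (z : T) (ad : T -> T -> T) (op : T -> T)
    (S : T -> Prop) : T -> Prop :=
| zspan0 : zspan z ad op S z
| zspan_gen x : S x -> zspan z ad op S x
| zspan_opp x : zspan z ad op S x -> zspan z ad op S (op x)
| zspan_add x y : zspan z ad op S x -> zspan z ad op S y ->
    zspan z ad op S (ad x y).

Definition sspan n (S : ser n -> Prop) := zspan (@szero n) (@sadd n) (@sopp n) S.

(* Projective configurations: lines l_0..l_n are the ordinals 'I_n.+1,
   points a finite type P, incidence  inc l p  means  l ≻ p.           *)
Definition proj_config n (P : finType) (inc : 'I_n.+1 -> P -> bool) : Prop :=
  (forall l m : 'I_n.+1, l != m -> exists! p : P, inc l p && inc m p) /\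
  (forall p : P, exists l m : 'I_n.+1, l != m /\ inc l p /\ inc m p).

Definition nondeg_config (P : finType) : Prop := (1 < #|P|)%N.

Section Construction.
Variables (n : nat) (P : finType) (inc : 'I_n.+1 -> P -> bool).

Definition lineof (i : 'I_n) : 'I_n.+1 := lift ord0 i.

Definition P0 (p : P) : bool := ~~ inc ord0 p.

Definition inA (i : 'I_n) (p : P) : bool := P0 p && inc (lineof i) p.

Definition Sp (p : P) : ser n := ssum (fun j : 'I_n => inc (lineof j) p) (@sx n).

Definition not_min (i : 'I_n) (p : P) : Prop :=
  exists j : 'I_n, (j < i)%N /\ inc (lineof j) p.

Definition rbar (i : 'I_n) (p : P) : ser n := sbr (sx i) (Sp p).

Definition Hsub : ser n -> Prop := sspan (fun f => exists i : 'I_n, f = sx i).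
Definition R2 : ser n -> Prop :=
  sspan (fun f => exists (i : 'I_n) (p : P), inA i p /\ not_min i p /\ f = rbar i p).
Definition R3 : ser n -> Prop :=
  sspan (fun f => exists h r, Hsub h /\ R2 r /\ f = sbr h r).

(* A = H^𝒜 ; elements represented by functions 'I_n -> P -> ser n, of
   which only the values at pairs in 𝒜 are relevant. *)
Definition Aelt := 'I_n -> P -> ser n.

Definition Azero : Aelt := fun _ _ => @szero n.
Definition Aadd (a b : Aelt) : Aelt := fun j q => sadd (a j q) (b j q).
Definition Aopp (a : Aelt) : Aelt := fun j q => sopp (a j q).

Definition tau_rep (a : Aelt) (i : 'I_n) (p : P) : ser n :=
  sadd (sbr (sbr (sx i) (a i p)) (Sp p))
       (sbr (sx i) (ssum (fun j : 'I_n => inc (lineof j) p)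
                         (fun j => sbr (sx j) (a j p)))).

(* τ̃ a = 0 in Hom(R_2, P_3): it vanishes on the basis of R_2 *)
Definition in_ker_tau (a : Aelt) : Prop :=
  forall (i : 'I_n) (p : P), inA i p -> not_min i p -> R3 (tau_rep a i p).

Definition a0 (i : 'I_n) (p : P) : Aelt :=
  fun j q => if (j == i) && (q == p) then sx i else @szero n.
Definition a1 (i : 'I_n) (p : P) : Aelt :=
  fun j q => if q == p then sx i else @szero n.
Definition a2 (i : 'I_n) (p1 p2 : P) : Aelt :=
  fun j q => if (j == i) && (q == p1) then Sp p2 else @szero n.

Definition Ugen (a : Aelt) : Prop :=
  (exists i p, inA i p /\ a = a0 i p) \/
  (exists i p, P0 p /\ a = a1 i p) \/
  (exists i p1 p2, inA i p1 /\ inA i p2 /\ a = a2 i p1 p2).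

Definition Usub : Aelt -> Prop := zspan Azero Aadd Aopp Ugen.

End Construction.

(* Main.v *)
Require Import Defs.
From mathcomp Require Import all_boot all_order all_algebra.
From mathcomp Require Import ring.
From Stdlib Require Import FunctionalExtensionality Classical.
Set Implicit Arguments. Unset Strict Implicit. Unset Printing Implicit Defensive.
Import GRing.Theory.
Local Open Scope ring_scope.

Section Alg.
Variable n : nat.
Implicit Types f g h : ser n.

Lemma fext f g : (forall w, f w = g w) -> f = g.
Proof. exact: functional_extensionality. Qed.

Lemma saddE f g w : sadd f g w = f w + g w. Proof. by []. Qed.
Lemma soppE f w : sopp f w = - f w. Proof. by []. Qed.
Lemma szeroE w : (@szero n) w = 0. Proof. by []. Qed.
Lemma ssumE (I : finType) (Q : pred I) (F : I -> ser n) w :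
  ssum Q F w = \sum_(j | Q j) F j w.
Proof. by []. Qed.

Lemma smul_nil f g : smul f g [::] = f [::] * g [::].
Proof. by rewrite /smul big_ord_recl big_ord0 addr0. Qed.

Lemma smul_cons f g a w :
  smul f g (a :: w) = f [::] * g (a :: w) + smul (fun u => f (a :: u)) g w.
Proof.
by rewrite /smul /= big_ord_recl /=.
Qed.

Lemma smulDl f g h : smul (sadd f g) h = sadd (smul f h) (smul g h).
Proof. by apply: fext => w; rewrite /smul saddE -big_split; apply: eq_bigr => k _; rewrite mulrDl. Qed.
Lemma smulDr f g h : smul h (sadd f g) = sadd (smul h f) (smul h g).
Proof. by apply: fext => w; rewrite /smul saddE -big_split; apply: eq_bigr => k _; rewrite mulrDr. Qed.
Lemma smulNl f g : smul (sopp f) g = sopp (smul f g).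
Proof. by apply: fext => w; rewrite /smul soppE -sumrN; apply: eq_bigr => k _; rewrite mulNr. Qed.
Lemma smulNr f g : smul g (sopp f) = sopp (smul g f).
Proof. by apply: fext => w; rewrite /smul soppE -sumrN; apply: eq_bigr => k _; rewrite mulrN. Qed.
Lemma smul0l f : smul ((@szero n)) f = (@szero n).
Proof. by apply: fext => w; rewrite /smul big1 // => k _; rewrite mul0r. Qed.
Lemma smul0r f : smul f ((@szero n)) = (@szero n).
Proof. by apply: fext => w; rewrite /smul big1 // => k _; rewrite mulr0. Qed.

Lemma smul_scal (c : int) f h w :
  smul (fun u => c * f u) h w = c * smul f h w.
Proof. by rewrite /smul mulr_sumr; apply: eq_bigr => k _; rewrite mulrA. Qed.

Lemma smulA_pt w : forall f g h, smul (smul f g) h w = smul f (smul g h) w.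
Proof.
elim: w => [|a w IH] f g h.
  by rewrite !smul_nil mulrA.
rewrite smul_cons smul_nil.
have -> : (fun u => smul f g (a :: u)) =
   sadd (fun u => f [::] * g (a :: u)) (smul (fun u => f (a :: u)) g).
  by apply: fext => u; rewrite smul_cons.
rewrite smulDl saddE smul_scal IH.
rewrite [smul f (smul g h) _]smul_cons smul_cons; ring.
Qed.

Lemma smulA f g h : smul (smul f g) h = smul f (smul g h).
Proof. by apply: fext => w; apply: smulA_pt. Qed.

Lemma smul_suml (I : finType) (Q : pred I) (F : I -> ser n) h :
  smul (ssum Q F) h = ssum Q (fun j => smul (F j) h).
Proof.
apply: fext => w; rewrite /smul ssumE.
under eq_bigr do rewrite ssumE mulr_suml.
by rewrite exchange_big.
Qed.
Lemma smul_sumr (I : finType) (Q : pred I) (F : I -> ser n) h :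
  smul h (ssum Q F) = ssum Q (fun j => smul h (F j)).
Proof.
apply: fext => w; rewrite /smul ssumE.
under eq_bigr do rewrite ssumE mulr_sumr.
by rewrite exchange_big.
Qed.

Lemma eq_ssum (I : finType) (Q : pred I) (F G : I -> ser n) :
  (forall j, F j = G j) -> ssum Q F = ssum Q G.
Proof. by move=> H; congr ssum; apply: functional_extensionality. Qed.

Lemma ssumD (I : finType) (Q : pred I) (F G : I -> ser n) :
  ssum Q (fun j => sadd (F j) (G j)) = sadd (ssum Q F) (ssum Q G).
Proof. by apply: fext => w; rewrite !ssumE saddE -big_split. Qed.
Lemma ssumN (I : finType) (Q : pred I) (F : I -> ser n) :
  ssum Q (fun j => sopp (F j)) = sopp (ssum Q F).
Proof. by apply: fext => w; rewrite !ssumE soppE -sumrN. Qed.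
Lemma ssum0 (I : finType) (Q : pred I) :
  ssum Q (fun j => (@szero n)) = (@szero n).
Proof. by apply: fext => w; rewrite !ssumE big1. Qed.

Lemma sbr_suml (I : finType) (Q : pred I) (F : I -> ser n) h :
  sbr (ssum Q F) h = ssum Q (fun j => sbr (F j) h).
Proof. by rewrite /sbr smul_suml smul_sumr ssumD ssumN. Qed.
Lemma sbr_sumr (I : finType) (Q : pred I) (F : I -> ser n) h :
  sbr h (ssum Q F) = ssum Q (fun j => sbr h (F j)).
Proof. by rewrite /sbr smul_suml smul_sumr ssumD ssumN. Qed.

Lemma sbrDl f g h : sbr (sadd f g) h = sadd (sbr f h) (sbr g h).
Proof. rewrite /sbr smulDl smulDr; apply: fext => w; rewrite !(saddE, soppE); ring. Qed.
Lemma sbrDr f g h : sbr h (sadd f g) = sadd (sbr h f) (sbr h g).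
Proof. rewrite /sbr smulDl smulDr; apply: fext => w; rewrite !(saddE, soppE); ring. Qed.
Lemma sbrNl f g : sbr (sopp f) g = sopp (sbr f g).
Proof. rewrite /sbr smulNl smulNr; apply: fext => w; rewrite !(saddE, soppE); ring. Qed.
Lemma sbrNr f g : sbr g (sopp f) = sopp (sbr g f).
Proof. rewrite /sbr smulNl smulNr; apply: fext => w; rewrite !(saddE, soppE); ring. Qed.
Lemma sbr0l f : sbr ((@szero n)) f = (@szero n).
Proof. rewrite /sbr smul0l smul0r; apply: fext => w; rewrite !(saddE, soppE, szeroE); ring. Qed.
Lemma sbr0r f : sbr f ((@szero n)) = (@szero n).
Proof. rewrite /sbr smul0l smul0r; apply: fext => w; rewrite !(saddE, soppE, szeroE); ring. Qed.
Lemma sbrxx f : sbr f f = (@szero n).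
Proof. apply: fext => w; rewrite /sbr !(saddE, soppE); ring. Qed.
Lemma sbrC f g : sbr f g = sopp (sbr g f).
Proof. apply: fext => w; rewrite /sbr !(saddE, soppE); ring. Qed.

Lemma jacobi f g h :
  sadd (sbr (sbr f g) h) (sbr f (sbr h g)) = sopp (sbr g (sbr f h)).
Proof.
rewrite /sbr !(smulDl, smulDr, smulNl, smulNr) !smulA.
apply: fext => w; rewrite !(saddE, soppE); ring.
Qed.

End Alg.

Section Main.
Variables (n : nat) (P : finType) (inc : 'I_n.+1 -> P -> bool).

Lemma zspan_ssum (S : ser n -> Prop) (I : finType) (Q : pred I) (F : I -> ser n) :
  (forall j, Q j -> sspan S (F j)) -> sspan S (ssum Q F).
Proof.
move=> H.
suff: forall s, sspan S (fun w => \sum_(j <- s | Q j) F j w) by apply.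
elim => [|x s IH].
  have -> : (fun w => \sum_(j <- [::] | Q j) F j w) = @szero n.
    by apply: fext => w; rewrite big_nil.
  exact: zspan0.
case Qx: (Q x).
  have -> : (fun w => \sum_(j <- x :: s | Q j) F j w) =
            sadd (F x) (fun w => \sum_(j <- s | Q j) F j w).
    by apply: fext => w; rewrite big_cons Qx.
  by apply: zspan_add => //; apply: H.
have -> : (fun w => \sum_(j <- x :: s | Q j) F j w) =
          (fun w => \sum_(j <- s | Q j) F j w).
  by apply: fext => w; rewrite big_cons Qx.
exact: IH.
Qed.

Lemma Hsub_x (k : 'I_n) : Hsub (sx k).
Proof. by apply: zspan_gen; exists k. Qed.

Lemma Hsub_Sp p : Hsub (Sp inc p).
Proof. by apply: zspan_ssum => j _; apply: Hsub_x. Qed.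

Lemma R3_br h r : Hsub h -> R2 inc r -> R3 inc (sbr h r).
Proof. by move=> Hh Hr; apply: zspan_gen; exists h, r. Qed.

Lemma R2_xS k q : inA inc k q -> R2 inc (sbr (sx k) (Sp inc q)).
Proof.
move=> HA.
have /andP[P0q Qk] := HA.
case: (classic (not_min inc k q)) => Hnm.
  by apply: zspan_gen; exists k, q.
pose Q := fun j : 'I_n => inc (lineof j) q.
have E0 : ssum Q (fun j => sbr (sx j) (Sp inc q)) = @szero n.
  by rewrite -sbr_suml sbrxx.
have E : sbr (sx k) (Sp inc q) =
   sopp (ssum (fun j => Q j && (j != k)) (fun j => sbr (sx j) (Sp inc q))).
  apply: fext => w; have := congr1 (fun f => f w) E0.
  rewrite ssumE (bigD1 k) //= => H.
  by rewrite soppE ssumE; move/eqP: H; rewrite addr_eq0 => /eqP.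
rewrite E; apply: zspan_opp; apply: zspan_ssum => j /andP[Qj jk].
apply: zspan_gen; exists j, q; split; first by rewrite /inA P0q.
split => //; exists k; split => //.
case: (ltngtP j k) => // [jk'|/val_inj/eqP]; last by rewrite (negbTE jk).
by case: Hnm; exists j.
Qed.

Lemma tau_rep_add a b i p :
  tau_rep inc (Aadd a b) i p = sadd (tau_rep inc a i p) (tau_rep inc b i p).
Proof.
rewrite /tau_rep /Aadd.
under eq_ssum => j do rewrite sbrDr.
rewrite ssumD !sbrDr !sbrDl; apply: fext => w; rewrite !saddE; ring.
Qed.

Lemma tau_rep_opp a i p :
  tau_rep inc (Aopp a) i p = sopp (tau_rep inc a i p).
Proof.
rewrite /tau_rep /Aopp.
under eq_ssum => j do rewrite sbrNr.
rewrite ssumN !sbrNr !sbrNl; apply: fext => w; rewrite !(saddE, soppE); ring.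
Qed.

Lemma tau_rep_zero a i p : (forall j, a j p = @szero n) ->
  tau_rep inc a i p = @szero n.
Proof.
move=> H; rewrite /tau_rep (H i).
under eq_ssum => j do rewrite H sbr0r.
rewrite ssum0 !sbr0r sbr0l; apply: fext => w; rewrite !(saddE, szeroE); ring.
Qed.

Lemma sbr_if_xx (j k : 'I_n) :
  sbr (sx j) (if j == k then sx k else @szero n) = @szero n.
Proof. by case: eqP => [->|_]; rewrite ?sbrxx ?sbr0r. Qed.

Lemma ssum_single (Q : pred 'I_n) k (F : 'I_n -> ser n) : Q k ->
  ssum Q (fun j => sbr (sx j) (if j == k then F j else @szero n)) = sbr (sx k) (F k).
Proof.
move=> Qk; apply: fext => w; rewrite ssumE (bigD1 k) //= eqxx big1 ?addr0 //.
by move=> j /andP[_ /negbTE ->]; rewrite sbr0r.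
Qed.

End Main.

Theorem proposition2p4 (n : nat) (P : finType) (inc : 'I_n.+1 -> P -> bool) :
  proj_config inc -> nondeg_config P ->
  forall (a : Aelt n P), Usub inc a -> in_ker_tau inc a.
Proof.
move=> _ _ a; elim => [|x Hx|x Hx IH|x y Hx IHx Hy IHy] i p HA Hnm.
- rewrite tau_rep_zero; first exact: zspan0.
  by [].
- case: Hx => [[k [q [Hkq ->]]]|[[k [q [Hq ->]]]|[k [p1 [p2 [H1 [H2 ->]]]]]]].
  + case: (eqVneq q p) => [eqqp|qp]; last first.
      rewrite tau_rep_zero; first exact: zspan0.
      by move=> j; rewrite /a0 [p == _]eq_sym (negbTE qp) andbF.
    subst q; rewrite /tau_rep /a0 eqxx.
    under eq_ssum => j do rewrite andbT sbr_if_xx.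
    rewrite andbT sbr_if_xx ssum0 sbr0l sbr0r.
    have -> : sadd (@szero n) (@szero n) = @szero n by apply: fext => w; rewrite saddE addr0.
    exact: zspan0.
  + case: (eqVneq q p) => [eqqp|qp]; last first.
      rewrite tau_rep_zero; first exact: zspan0.
      by move=> j; rewrite /a1 [p == _]eq_sym (negbTE qp).
    subst q; rewrite /tau_rep /a1 eqxx.
    have -> : ssum (fun j : 'I_n => inc (lineof j) p) (fun j => sbr (sx j) (sx k))
              = sbr (Sp inc p) (sx k) by rewrite sbr_suml.
    rewrite jacobi; apply: zspan_opp; apply: R3_br; first exact: Hsub_x.
    by apply: zspan_gen; exists i, p; split => //; split.
  + case: (eqVneq p1 p) => [eqqp|qp]; last first.
      rewrite tau_rep_zero; first exact: zspan0.
      by move=> j; rewrite /a2 [p == _]eq_sym (negbTE qp) andbF.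
    subst p1; rewrite /tau_rep /a2 eqxx.
    under eq_ssum => j do rewrite andbT.
    rewrite ssum_single; last by case/andP: H1.
    rewrite andbT.
    have Hb : R3 inc (sbr (sx i) (sbr (sx k) (Sp inc p2))).
      by apply: R3_br; [exact: Hsub_x | exact: R2_xS].
    case: eqP => [->|_].
      apply: zspan_add; last exact: R3_br (Hsub_x _) (R2_xS H2).
      rewrite [sbr (sbr _ _) (Sp inc p)]sbrC; apply: zspan_opp.
      by apply: R3_br; [exact: Hsub_Sp | exact: R2_xS].
    rewrite sbr0r sbr0l; apply: zspan_add => //; apply: zspan0.
- by rewrite tau_rep_opp; apply: zspan_opp; apply: IH.
- by rewrite tau_rep_add; apply: zspan_add; [apply: IHx | apply: IHy].
Qed.
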